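(* Let $\mathcal{L}$ and $\mathcal{K}$ be two linkages in a directed graph $G$ and let $k \ge 1$, $\alpha,\beta \ge 1$ be integers. Let $U_1,\ldots,U_k$ be walks in $G$ such that the family $(U_i)_{i=1}^k$ has congestion $\alpha$, and for each $i$ let $\mathcal{U}_i$ be the family of paths of $\mathcal{L}$ that are subpaths of $U_i$. Similarly, let $W_1,\ldots,W_k$ be walks in $G$ such that $(W_i)_{i=1}^k$ has congestion $\beta$, and let $\mathcal{W}_i$ be the family of paths of $\mathcal{K}$ that are subpaths of $W_i$. If for every $1 \le i \leq k$ the subgraph of the intersection graph $I(\mathcal{L},\mathcal{K})$ induced by $\mathcal{U}_i\cup\mathcal{W}_i$ has average degree at least $2$, then $G$ contains a family of $k$ directed cycles of congestion $\alpha +\beta$.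
   Context: For $A,B\subseteq V(G)$ with $|A|=|B|$, a linkage from $A$ to $B$ is a set of $|A|$ pairwise vertex-disjoint directed paths each starting in $A$ and ending in $B$. A family of walks/cycles is of congestion $c$ if every vertex is visited at most $c$ times in total (each visit counted separately). The intersection graph $I(\mathcal{L},\mathcal{K})$ is the bipartite graph on $\mathcal{L}\cup\mathcal{K}$ in which $L\in\mathcal{L}$ and $K\in\mathcal{K}$ are adjacent iff they share a vertex. *)

(* Defs.v *)
From mathcomp Require Import all_boot.
Set Implicit Arguments. Unset Strict Implicit. Unset Printing Implicit Defensive.

Section Digraphs.
Variables (V : finType) (E : rel V).

Definition walk (s : seq V) : bool :=
  if s is x :: p then path E x p else false.

Definition dipath (s : seq V) : bool := walk s && uniq s.

Definition dicycle (c : seq V) : bool :=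
  [&& c != [::], uniq c & cycle E c].

Definition subpath_of (P U : seq V) : bool := infix P U.

Definition meet (P Q : seq V) : bool := has (mem Q) P.

Definition linkage m (L : 'I_m -> seq V) : Prop :=
  (forall j, dipath (L j)) /\
  (forall j j', j != j' -> ~~ meet (L j) (L j')).

Definition congestion k (F : 'I_k -> seq V) (c : nat) : Prop :=
  forall v : V, \sum_(i < k) count_mem v (F i) <= c.

Definition sub_family m (L : 'I_m -> seq V) (U : seq V) : {set 'I_m} :=
  [set j | subpath_of (L j) U].

(* Number of edges of the intersection graph I(L,K) induced on the vertex
   set A (a subset of L) together with B (a subset of K); I(L,K) is bipartite
   with L, K as the two (disjoint) sides. *)
Definition ig_edges m n (L : 'I_m -> seq V) (K : 'I_n -> seq V)
    (A : {set 'I_m}) (B : {set 'I_n}) : nat :=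
  #|[set jl : 'I_m * 'I_n | [&& jl.1 \in A, jl.2 \in B & meet (L jl.1) (K jl.2)]]|.

(* The induced subgraph of I(L,K) on A u B has average degree at least 2:
   it is nonempty and 2|edges| / |vertices| >= 2. *)
Definition avg_deg_ge2 m n (L : 'I_m -> seq V) (K : 'I_n -> seq V)
    (A : {set 'I_m}) (B : {set 'I_n}) : Prop :=
  0 < #|A| + #|B| /\ #|A| + #|B| <= ig_edges L K A B.

End Digraphs.

(* Main.v *)
Require Import Defs.
From mathcomp Require Import all_boot zify.
Set Implicit Arguments. Unset Strict Implicit. Unset Printing Implicit Defensive.
From Stdlib Require Import Classical.

Section Comb.
Variables (V : finType) (h : V -> nat).
Let r := fun x y : V => h x < h y.

Lemma bnds d (P : seq V) u : pairwise r P -> u \in P ->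
  h (head d P) <= h u <= h (last d P).
Proof.
case: P => [|x p] //=.
elim: p x => [|y p IH] x /=; first by rewrite inE => _ /eqP ->; rewrite leqnn.
move=> /andP [/andP [rxy /allP rxp] pr].
rewrite inE => /orP [/eqP ->|uin].
  rewrite leqnn /=. have: last y p \in y :: p by apply: mem_last.
  by rewrite inE => /orP [/eqP ->|/rxp]; [apply: ltnW|move=> H; apply: ltnW].
have := IH y pr uin => /andP [h1 h2]. rewrite h2 andbT.
by apply: leq_trans (ltnW rxy) h1.
Qed.

Lemma inside d (U P : seq V) u : pairwise r U -> infix P U -> P != [::] ->
  u \in U -> h (head d P) <= h u <= h (last d P) -> u \in P.
Proof.
move=> pU /infixP [s [s' eU]] Pn; subst U.
move: pU; rewrite !pairwise_cat => /and3P [a1 _ /and3P [a2 _ _]].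
rewrite !mem_cat => /or3P [us|//|us'] /andP [l1 l2].
  have hP : head d P \in P ++ s' by case: P Pn {a1 a2 l1 l2} => //= x p _; rewrite inE eqxx.
  have := allrelP a1 u (head d P) us hP. rewrite /r. lia.
have hP : last d P \in P by case: P Pn {a1 a2 l1 l2} => //= x p _; apply: mem_last.
have := allrelP a2 (last d P) u hP us'. rewrite /r. lia.
Qed.

Lemma disj_int d (U P Q : seq V) t : pairwise r U -> infix P U -> infix Q U ->
  P != [::] -> Q != [::] -> ~~ meet P Q ->
  h (head d P) <= t <= h (last d P) -> h (head d Q) <= t <= h (last d Q) -> False.
Proof.
have key : forall P Q, pairwise r U -> infix P U -> infix Q U ->
  P != [::] -> Q != [::] -> ~~ meet P Q ->
  h (head d P) <= t <= h (last d P) -> h (head d Q) <= t <= h (last d Q) ->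
  h (head d P) <= h (head d Q) -> False.
  move=> {}P {}Q pU iP iQ Pn Qn mPQ tP tQ le.
  have hQ : head d Q \in Q by case: Q Qn {iQ mPQ tQ le} => //= x q _; rewrite inE eqxx.
  have hU : head d Q \in U by apply: (mem_subseq (infixW iQ)).
  have : head d Q \in P.
    apply: (inside (d:=d) pU iP Pn hU). move: tP tQ le. lia.
  move=> hP; move/negP: mPQ; apply; by apply/hasP; exists (head d Q).
move=> pU iP iQ Pn Qn mPQ tP tQ.
case: (leqP (h (head d P)) (h (head d Q))) => le.
  exact: (key P Q).
apply: (key Q P) => //; last exact: ltnW.
by rewrite /meet has_sym.
Qed.


Lemma ig_bound (d : V) m n (L : 'I_m -> seq V) (K : 'I_n -> seq V) (U W : seq V)
  (A : {set 'I_m}) (B : {set 'I_n}) :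
  pairwise r U -> pairwise r W ->
  (forall a, L a != [::]) -> (forall b, K b != [::]) ->
  (forall a a', a != a' -> ~~ meet (L a) (L a')) ->
  (forall b b', b != b' -> ~~ meet (K b) (K b')) ->
  (forall a, a \in A -> infix (L a) U) -> (forall b, b \in B -> infix (K b) W) ->
  0 < #|A| + #|B| -> ig_edges L K A B < #|A| + #|B|.
Proof.
move=> pU pW Ln Kn dL dK iL iK pos.
pose hiL a := h (last d (L a)). pose loL a := h (head d (L a)).
pose hiK b := h (last d (K b)). pose loK b := h (head d (K b)).
have pL a : a \in A -> pairwise r (L a).
  by move=> aA; apply: subseq_pairwise (infixW (iL a aA)) pU.
have pK b : b \in B -> pairwise r (K b).
  by move=> bB; apply: subseq_pairwise (infixW (iK b bB)) pW.
pose Ed := [set jl : 'I_m * 'I_n | [&& jl.1 \in A, jl.2 \in B & meet (L jl.1) (K jl.2)]].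
pose phi (jl : 'I_m * 'I_n) : 'I_m + 'I_n :=
  if hiL jl.1 <= hiK jl.2 then inl jl.1 else inr jl.2.
pose D : {set 'I_m + 'I_n} := [set inl x | x in A] :|: [set inr x | x in B].
have cD : #|D| = #|A| + #|B|.
  rewrite cardsU !card_imset; [|move=> x y [] //|move=> x y [] //].
  suff -> : [set inl x | x in A] :&: [set inr x | x in B] = set0 :> {set 'I_m + 'I_n}.
    by rewrite cards0 subn0.
  apply/setP => x; rewrite !inE.
  apply/negP => /andP [/imsetP [a _ ->] /imsetP [b _]] //.
pose key (x : 'I_m + 'I_n) := match x with inl a => 2 * hiL a | inr b => (2 * hiK b).+1 end.
have [x0 x0D] : exists x0, x0 \in D.
  case: (posnP #|A|) => [A0|].
    rewrite A0 add0n in pos. case/card_gt0P: pos => b bB.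
    by exists (inr b); rewrite inE; apply/orP; right; apply: imset_f.
  case/card_gt0P => a aA.
  by exists (inl a); rewrite inE; apply/orP; left; apply: imset_f.
pose z := [arg max_(x > x0 in D) key x].
have [zD zmax] : z \in D /\ forall y, y \in D -> key y <= key z.
  rewrite /z; case: arg_maxnP => // i iD imax; split => //.
have meetv a b : meet (L a) (K b) -> exists2 v, v \in L a & v \in K b.
  by move/hasP => [v v1 v2]; exists v.
have inL a b : a \in A -> b \in B -> meet (L a) (K b) ->
    loK b <= hiL a /\ loL a <= hiK b.
  move=> aA bB /meetv [v v1 v2].
  have := bnds d (pL a aA) v1. have := bnds d (pK b bB) v2.
  rewrite /loK /hiL /loL /hiK. lia.
have inj : {in Ed &, injective phi}.
  move=> [a b] [a' b']; rewrite !inE /= => /and3P [aA bB mab] /and3P [aA' bB' mab'].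
  rewrite /phi /=.
  case: leqP => h1; case: leqP => h2 // [].
  - move=> eaa; subst a'. case: (eqVneq b b') => [->//|nbb].
    have [c1 _] := inL a b aA bB mab. have [c2 _] := inL a b' aA bB' mab'.
    exfalso; apply: (disj_int (d:=d) (t:=hiL a) pW (iK b bB) (iK b' bB') (Kn b) (Kn b') (dK b b' nbb)).
      by rewrite -/(loK b) -/(hiK b) c1 h1.
    by rewrite -/(loK b') -/(hiK b') c2 h2.
  - move=> ebb; subst b'. case: (eqVneq a a') => [->//|naa].
    have [_ c1] := inL a b aA bB mab. have [_ c2] := inL a' b aA' bB mab'.
    exfalso; apply: (disj_int (d:=d) (t:=hiK b) pU (iL a aA) (iL a' aA') (Ln a) (Ln a') (dL a a' naa)).
      by rewrite -/(loL a) -/(hiL a) c1 (ltnW h1).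
    by rewrite -/(loL a') -/(hiL a') c2 (ltnW h2).
have sub : [set phi x | x in Ed] \subset D :\ z.
  apply/subsetP => y /imsetP [[a b]]; rewrite inE /= => /and3P [aA bB mab] ->.
  rewrite /phi /=; case: leqP => h1; rewrite !inE.
  - apply/andP; split; last by apply/orP; left; apply: imset_f.
    apply/eqP => ez.
    have : key (inr b) <= key z.
      by apply: zmax; rewrite inE; apply/orP; right; apply: imset_f.
    rewrite -ez /=. lia.
  - apply/andP; split; last by apply/orP; right; apply: imset_f.
    apply/eqP => ez.
    have : key (inl a) <= key z.
      by apply: zmax; rewrite inE; apply/orP; left; apply: imset_f.
    rewrite -ez /=. lia.
have : #|Ed| <= #|D :\ z| by rewrite -(card_in_imset inj); apply: subset_leq_card.
rewrite /ig_edges -/Ed -cD (cardsD1 z D) zD. lia.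
Qed.

End Comb.

Section Height.
Variables (V : finType) (E : rel V) (S : seq V).
Let E' := [rel x y | [&& E x y, x \in S & y \in S]].

Lemma pathS x p : path E' x p -> all (mem S) p.
Proof.
elim: p x => [|y p IH] x //= /andP [/and3P [_ _ yS] pp].
by rewrite yS (IH y pp).
Qed.

Lemma height : (forall c, dicycle E c -> all (mem S) c -> False) ->
  exists h : V -> nat, forall x y, x \in S -> y \in S -> E x y -> h x < h y.
Proof.
move=> noc.
exists (fun x => #|[set z | connect E' z x]|) => x y xS yS exy.
apply: proper_card; apply/properP; split.
  apply/subsetP => z; rewrite !inE => zx.
  apply: connect_trans zx _; apply: connect1; by rewrite /= exy xS yS.
exists y; first by rewrite inE connect0.
rewrite inE; apply/negP => /connectP [p pp ex].
case: (shortenP pp) ex => p' pp' up' _ ex.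
apply: (noc (y :: p')).
  rewrite /dicycle up' /=.
  rewrite rcons_path -ex exy andbT.
  apply: sub_path pp' => a b /= /and3P [] //.
by rewrite /= yS (pathS pp').
Qed.
End Height.

Lemma one_cycle (V : finType) (E : rel V) m n (L : 'I_m -> seq V) (K : 'I_n -> seq V)
  (U W : seq V) : linkage E L -> linkage E K -> walk E U -> walk E W ->
  avg_deg_ge2 L K (sub_family L U) (sub_family K W) ->
  exists c, dicycle E c && all (mem (U ++ W)) c.
Proof.
move=> [Lp Ld] [Kp Kd] wU wW [pos le].
case: (classic (exists c, dicycle E c && all (mem (U ++ W)) c)) => // noc.
have [h hh] : exists h : V -> nat, forall x y, x \in U ++ W -> y \in U ++ W -> E x y -> h x < h y.
  apply: height => c dc ac; apply: noc; exists c; by rewrite dc ac.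
have tr : transitive (fun x y : V => h x < h y).
  by move=> y x z; apply: ltn_trans.
have pw (X : seq V) : walk E X -> {subset X <= U ++ W} -> pairwise (fun x y : V => h x < h y) X.
  case: X => [|x p] // px sX.
  rewrite -(sorted_pairwise tr).
  have sr : {in (U ++ W) &, subrel E (fun x y : V => h x < h y)}.
    by move=> a b aS bS; apply: hh.
  apply: (sub_in_path sr _ px).
  by apply/allP => a /sX.
case: U wU pos le noc hh pw => [|d U'] // wU pos le noc hh pw.
have s1 : {subset d :: U' <= (d :: U') ++ W} by move=> a aU; rewrite mem_cat aU.
have s2 : {subset W <= (d :: U') ++ W} by move=> a aW; rewrite mem_cat aW orbT.
have := ig_bound (h := h) d (pw _ wU s1) (pw _ wW s2).
move=> /(_ m n L K (sub_family L (d :: U')) (sub_family K W)).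
have Ln a : L a != [::] by move: (Lp a); rewrite /dipath; case: (L a).
have Kn b : K b != [::] by move: (Kp b); rewrite /dipath; case: (K b).
move=> /(_ Ln Kn Ld Kd).
have iL a : a \in sub_family L (d :: U') -> infix (L a) (d :: U') by rewrite inE.
have iK b : b \in sub_family K W -> infix (K b) W by rewrite inE.
move=> /(_ iL iK pos). lia.
Qed.

Theorem lemma17 (V : finType) (E : rel V)
    (m n : nat) (L : 'I_m -> seq V) (K : 'I_n -> seq V)
    (k alpha beta : nat) (U W : 'I_k -> seq V) :
  linkage E L -> linkage E K ->
  1 <= k -> 1 <= alpha -> 1 <= beta ->
  (forall i, walk E (U i)) -> congestion U alpha ->
  (forall i, walk E (W i)) -> congestion W beta ->
  (forall i, avg_deg_ge2 L K (sub_family L (U i)) (sub_family K (W i))) ->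
  exists C : 'I_k -> seq V,
    (forall i, dicycle E (C i)) /\ congestion C (alpha + beta).
Proof.
move=> lL lK _ _ _ wU cU wW cW avg.
have ex i := one_cycle lL lK (wU i) (wW i) (avg i).
exists (fun i => xchoose (ex i)); split.
  by move=> i; case/andP: (xchooseP (ex i)).
move=> v.
apply: leq_trans (_ : \sum_(i < k) (count_mem v (U i) + count_mem v (W i)) <= _).
  apply: leq_sum => i _.
  case/andP: (xchooseP (ex i)) => /and3P [_ uc _] /allP ac.
  rewrite -count_cat; apply/leq_uniq_countP => // vc.
  exact: ac.
by rewrite big_split /=; apply: leq_add.
Qed.
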